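(* Let $p,q$ be distinct propositional variables. The formula $\Box(p\vee q)\to((\neg\Box\neg p\to\Box q)\to\Box q)$ is derivable in $\mathsf{CK}\oplus\mathsf{N}_\Diamond\oplus\mathsf{wCD}$ but not in $\mathsf{CK}$.
   Context: Formulas: $\mathbf{L}$ is generated from a countably infinite set of propositional variables by $\varphi ::= p \mid \bot \mid \varphi\wedge\varphi \mid \varphi\vee\varphi \mid \varphi\to\varphi \mid \Box\varphi \mid \Diamond\varphi$; $\neg\varphi:=\varphi\to\bot$. Axioms: $\mathsf{K}_\Box$: $\Box(\varphi\to\psi)\to(\Box\varphi\to\Box\psi)$; $\mathsf{K}_\Diamond$: $\Box(\varphi\to\psi)\to(\Diamond\varphi\to\Diamond\psi)$; $\mathsf{N}_\Diamond$: $\Diamond\bot\to\bot$; $\mathsf{wCD}$: $\Box(\varphi\vee\psi)\to((\Diamond\varphi\to\Box\psi)\to\Box\psi)$. For a set $\mathsf{Ax}$ of axioms, $\mathsf{CK}\oplus\mathsf{Ax}$ is the relation $\Gamma\vdash_{\mathsf{Ax}}\varphi$ inductively generated by: (Ax) $\Gamma\vdash\varphi$ whenever $\varphi$ is a substitution instance of an axiom of a standard Hilbert axiomatisation of intuitionistic propositional logic, of $\mathsf{K}_\Box$, of $\mathsf{K}_\Diamond$, or of an element of $\mathsf{Ax}$; (El) $\Gamma\vdash\varphi$ if $\varphi\in\Gamma$; (MP) from $\Gamma\vdash\varphi$ and $\Gamma\vdash\varphi\to\psi$ infer $\Gamma\vdash\psi$; (Nec) from $\emptyset\vdash\varphi$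 infer $\Gamma\vdash\Box\varphi$. $\mathsf{CK}$ is the case $\mathsf{Ax}=\emptyset$. A formula is derivable in a logic if $\emptyset\vdash_{\mathsf{Ax}}\varphi$. *)

(* Defs.v *)
From Stdlib Require Import Arith.

Inductive form : Type :=
| Var : nat -> form
| Bot : form
| And : form -> form -> form
| Or : form -> form -> form
| Imp : form -> form -> form
| Box : form -> form
| Dia : form -> form.

Definition Neg (a : form) : form := Imp a Bot.

Inductive IPC_axiom : form -> Prop :=
| A1 a b : IPC_axiom (Imp a (Imp b a))
| A2 a b c : IPC_axiom (Imp (Imp a (Imp b c)) (Imp (Imp a b) (Imp a c)))
| A3 a b : IPC_axiom (Imp (And a b) a)
| A4 a b : IPC_axiom (Imp (And a b) b)
| A5 a b : IPC_axiom (Imp a (Imp b (And a b)))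
| A6 a b : IPC_axiom (Imp a (Or a b))
| A7 a b : IPC_axiom (Imp b (Or a b))
| A8 a b c : IPC_axiom (Imp (Imp a c) (Imp (Imp b c) (Imp (Or a b) c)))
| A9 a : IPC_axiom (Imp Bot a).

Inductive CK_axiom : form -> Prop :=
| KBox a b : CK_axiom (Imp (Box (Imp a b)) (Imp (Box a) (Box b)))
| KDia a b : CK_axiom (Imp (Box (Imp a b)) (Imp (Dia a) (Dia b))).

(* N_Dia : Dia Bot -> Bot (no variables, so its only instance is itself). *)
Inductive N_Dia : form -> Prop :=
| NDia_inst : N_Dia (Imp (Dia Bot) Bot).

Inductive wCD : form -> Prop :=
| wCD_inst a b : wCD (Imp (Box (Or a b)) (Imp (Imp (Dia a) (Box b)) (Box b))).

Definition axU (X Y : form -> Prop) : form -> Prop := fun f => X f \/ Y f.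
Definition noAx : form -> Prop := fun _ => False.

Inductive derives (Ax : form -> Prop) : (form -> Prop) -> form -> Prop :=
| d_ipc G f : IPC_axiom f -> derives Ax G f
| d_ck G f : CK_axiom f -> derives Ax G f
| d_ax G f : Ax f -> derives Ax G f
| d_el G f : G f -> derives Ax G f
| d_mp G f g : derives Ax G f -> derives Ax G (Imp f g) -> derives Ax G g
| d_nec G f : derives Ax (fun _ => False) f -> derives Ax G (Box f).

Definition derivable (Ax : form -> Prop) (f : form) : Prop :=
  derives Ax (fun _ => False) f.

(* Main.v *)
Require Import Defs.

Section Ded.
Variable Ax : form -> Prop.

Lemma d_id G a : derives Ax G (Imp a a).
Proof.
  eapply d_mp. apply d_ipc, (A1 a a).
  eapply d_mp. apply d_ipc, (A1 a (Imp a a)).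
  apply d_ipc, A2.
Qed.

Lemma ded G a f : derives Ax (fun x => G x \/ x = a) f -> derives Ax G (Imp a f).
Proof.
  intro H. remember (fun x => G x \/ x = a) as G' eqn:E. revert G E.
  induction H; intros G0 E; subst.
  - eapply d_mp. apply d_ipc; eassumption. apply d_ipc, A1.
  - eapply d_mp. apply d_ck; eassumption. apply d_ipc, A1.
  - eapply d_mp. apply d_ax; eassumption. apply d_ipc, A1.
  - destruct H as [H|H].
    + eapply d_mp. apply d_el; eassumption. apply d_ipc, A1.
    + subst. apply d_id.
  - eapply d_mp. apply (IHderives1 G0 eq_refl).
    eapply d_mp. apply (IHderives2 G0 eq_refl). apply d_ipc, A2.
  - eapply d_mp. apply d_nec; eassumption. apply d_ipc, A1.
Qed.
End Ded.

Inductive W := w0 | w1 | u | u'.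

Section Model.
Variables p q : nat.
Definition le (x y : W) : Prop := x = y \/ (x = w0 /\ y = w1).
Definition R (x y : W) : Prop := (x = w0 /\ y = u) \/ (x = w1 /\ y = u').
Definition val (n : nat) (x : W) : Prop := (n = p /\ x = u) \/ (n = q /\ x = u').

Fixpoint sat (w : W) (f : form) : Prop :=
  match f with
  | Var n => val n w
  | Bot => False
  | And a b => sat w a /\ sat w b
  | Or a b => sat w a \/ sat w b
  | Imp a b => forall v, le w v -> sat v a -> sat v b
  | Box a => forall v x, le w v -> R v x -> sat x a
  | Dia _ => True
  end.

Lemma le_refl x : le x x. Proof. left; auto. Qed.
Lemma le_trans x y z : le x y -> le y z -> le x z.
Proof. unfold le; intros [->|[-> ->]] [->|[? ->]]; auto; discriminate. Qed.

Lemma mono f : forall w v, le w v -> sat w f -> sat v f.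
Proof.
  induction f; simpl; intros w v Hl Hs.
  - destruct Hl as [->|[-> ->]]; auto. unfold val in *. destruct Hs as [[_ H]|[_ H]]; discriminate.
  - auto.
  - destruct Hs; split; eauto.
  - destruct Hs; [left|right]; eauto.
  - intros v' H1 H2. apply (Hs v'); auto. eapply le_trans; eauto.
  - intros v' x H1 H2. apply (Hs v' x); auto. eapply le_trans; eauto.
  - auto.
Qed.

Definition valid f := forall w, sat w f.

Lemma sound G f : derives noAx G f -> (forall g, G g -> valid g) -> valid f.
Proof.
  induction 1; intros HG w.
  - destruct H; simpl; intros.
    + eapply mono; eauto.
    + exact (H0 v1 (le_trans _ _ _ H1 H3) H4 v1 (le_refl _) (H2 v1 H3 H4)).
    + tauto.
    + tauto.
    + split; auto. eapply mono; eauto.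
    + auto.
    + auto.
    + destruct H4; [exact (H0 v1 (le_trans _ _ _ H1 H3) H4) | exact (H2 v1 H3 H4)].
    + contradiction.
  - destruct H; simpl; intros; auto.
    exact (H0 v1 x (le_trans _ _ _ H1 H3) H4 x (le_refl _) (H2 v1 x H3 H4)).
  - destruct H.
  - apply HG; auto.
  - apply (IHderives2 HG w w (le_refl w)). apply IHderives1; auto.
  - simpl. intros. apply IHderives. intros _ [].
Qed.
End Model.

Theorem mainTheorem19 (p q : nat) (hpq : p <> q) :
  derivable (axU N_Dia wCD)
    (Imp (Box (Or (Var p) (Var q)))
         (Imp (Imp (Neg (Box (Neg (Var p)))) (Box (Var q))) (Box (Var q))))
  /\
  ~ derivable noAx
    (Imp (Box (Or (Var p) (Var q)))
         (Imp (Imp (Neg (Box (Neg (Var p)))) (Box (Var q))) (Box (Var q)))).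
Proof.
  split.
  - unfold derivable. apply ded, ded.
    set (G := fun x => ((fun _ : form => False) x \/ x = Box (Or (Var p) (Var q))) \/
                       x = Imp (Neg (Box (Neg (Var p)))) (Box (Var q))).
    assert (HD : derives (axU N_Dia wCD) G (Imp (Dia (Var p)) (Box (Var q)))).
    { apply ded.
      eapply d_mp; [| apply d_el; left; right; reflexivity].
      unfold Neg. apply ded.
      eapply d_mp; [| apply d_ax; left; constructor].
      eapply d_mp; [apply d_el; left; right; reflexivity|].
      eapply d_mp; [apply d_el; right; reflexivity|].
      apply d_ck, KDia. }
    eapply d_mp; [exact HD|].
    eapply d_mp; [apply d_el; left; right; reflexivity|].
    apply d_ax; right; constructor.
  - intro H. pose proof (sound p q _ _ H (fun _ (f : False) => match f with end) w0) as S.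
    simpl in S.
    assert (B : forall v x, le w0 v -> R v x -> sat p q x (Or (Var p) (Var q))).
    { intros v x [<-|[_ ->]] [[? ->]|[? ->]]; try discriminate; simpl; unfold val; auto. }
    specialize (S w0 (le_refl _) B w0 (le_refl _)).
    assert (C : ~ sat p q w0 (Box (Var q))).
    { simpl. intro X. specialize (X w0 u (le_refl _) (or_introl (conj eq_refl eq_refl))).
      unfold val in X. destruct X as [[? _]|[_ ?]]; [congruence|discriminate]. }
    apply C. simpl. refine (S _).
    intros v Hv Hn. exfalso.
    assert (Hb : sat p q w1 (Box (Neg (Var p)))).
    { simpl. intros v' x [<-|[? _]] [[? _]|[_ ->]]; try discriminate.
      intros y [<-|[? _]] Hy; try discriminate. unfold val in Hy.
      destruct Hy as [[_ ?]|[? _]]; [discriminate|congruence]. }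
    apply (Hn w1); auto.
    destruct Hv as [<-|[_ ->]]; [right; auto | apply le_refl].
Qed.
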